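(* Let $\varphi : X \to X$ be a morphism in $\mathscr{C}$ and let $\kappa : K \to X$ be a kernel of $\varphi$. Then $\varphi$ has a core inverse if and only if $\varphi$ has a cokernel $\lambda : X \to L$ such that both $\kappa\lambda : K \to L$ and $\varphi^{*}\varphi^{3}+\kappa^{*}\kappa : X \to X$ are invertible. In this case, $\gamma=\lambda(\kappa\lambda)^{-1} : X \to K$ is a cokernel of $\varphi$, $\varphi^{\mathrm{core}}\varphi+\gamma\kappa=1_X$, and $$\varphi^{\mathrm{core}}=\varphi^{2}(\varphi^{*}\varphi^{3}+\kappa^{*}\kappa)^{-1}\varphi^{*}.$$
   Context: $\mathscr{C}$ is an additive category with an involution $*$: a map on morphisms sending $\varphi : X\to Y$ to $\varphi^* : Y \to X$ such that $(\varphi^* )^*=\varphi$, $(\varphi\psi)^*=\psi^*\varphi^*$ and $(\varphi+\phi)^*=\varphi^*+\phi^*$. Composition is written left to right: for $\varphi : X\to Y$ and $\psi : Y\to Z$, $\varphi\psi : X \to Z$ means ''first $\varphi$, then $\psi$''; powers $\varphi^n$ of an endomorphism are the $n$-fold composites. A kernel of $\varphi : X\to Y$ is a morphism $\kappa : K\to X$ with $\kappa\varphi=0$ such that every $\alpha : M\to X$ with $\alpha\varphi=0$ factors uniquely as $\alpha=\alpha'\kappa$. A cokernel of $\varphi$ is a morphism $\lambda : Y\to L$ with $\varphi\lambda=0$ such that every $\beta : Y\to M$ with $\varphi\beta=0$ factors uniquely as $\beta=\lambda\beta'$. A morphism is invertible if it has a two-sided inverse. For $\varphi : X\to X$, a core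 inverse of $\varphi$ is a morphism $\chi : X\to X$ with $(\varphi\chi)^*=\varphi\chi$, $\varphi\chi^2=\chi$ and $\chi\varphi^2=\varphi$. It is unique when it exists and is denoted $\varphi^{\mathrm{core}}$. *)

(* Defs.v *)
From HB Require Import structures.
From mathcomp Require Import all_boot all_order all_algebra.
Set Implicit Arguments. Unset Strict Implicit. Unset Printing Implicit Defensive.
Import GRing.Theory.
Local Open Scope ring_scope.

(* An additive category with an involution.  Composition is written
   left to right: [cmp f g] for f : X -> Y, g : Y -> Z means "first f, then g". *)
Record AddInvCat := {
  Ob :> Type;
  Mor : Ob -> Ob -> zmodType;
  cmp : forall X Y Z : Ob, Mor X Y -> Mor Y Z -> Mor X Z;
  idm : forall X : Ob, Mor X X;
  star : forall X Y : Ob, Mor X Y -> Mor Y X;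
  cmpA : forall (X Y Z W : Ob) (f : Mor X Y) (g : Mor Y Z) (h : Mor Z W),
      cmp f (cmp g h) = cmp (cmp f g) h;
  cmp1l : forall (X Y : Ob) (f : Mor X Y), cmp (idm X) f = f;
  cmp1r : forall (X Y : Ob) (f : Mor X Y), cmp f (idm Y) = f;
  cmpDl : forall (X Y Z : Ob) (f f' : Mor X Y) (g : Mor Y Z),
      cmp (f + f') g = cmp f g + cmp f' g;
  cmpDr : forall (X Y Z : Ob) (f : Mor X Y) (g g' : Mor Y Z),
      cmp f (g + g') = cmp f g + cmp f g';
  has_zero_object : exists Z : Ob, idm Z = 0;
  has_biproducts : forall X Y : Ob, exists (P : Ob) (i1 : Mor X P) (i2 : Mor Y P)
      (p1 : Mor P X) (p2 : Mor P Y),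
      [/\ cmp i1 p1 = idm X, cmp i2 p2 = idm Y, cmp i1 p2 = 0, cmp i2 p1 = 0
        & cmp p1 i1 + cmp p2 i2 = idm P];
  starK : forall (X Y : Ob) (f : Mor X Y), star (star f) = f;
  starM : forall (X Y Z : Ob) (f : Mor X Y) (g : Mor Y Z),
      star (cmp f g) = cmp (star g) (star f);
  starD : forall (X Y : Ob) (f g : Mor X Y), star (f + g) = star f + star g
}.

Arguments cmp {_ _ _ _}.
Arguments star {_ _ _}.
Arguments idm {_}.

Section Defs.
Variable C : AddInvCat.

Fixpoint pw (X : C) (f : Mor X X) (n : nat) : Mor X X :=
  match n with O => idm X | S m => cmp f (pw f m) end.

Definition is_kernel (X Y K : C) (phi : Mor X Y) (kappa : Mor K X) : Prop :=
  cmp kappa phi = 0 /\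
  forall (M : C) (alpha : Mor M X), cmp alpha phi = 0 ->
    exists! alpha' : Mor M K, cmp alpha' kappa = alpha.

Definition is_cokernel (X Y L : C) (phi : Mor X Y) (lam : Mor Y L) : Prop :=
  cmp phi lam = 0 /\
  forall (M : C) (beta : Mor Y M), cmp phi beta = 0 ->
    exists! beta' : Mor L M, cmp lam beta' = beta.

Definition is_inverse (X Y : C) (f : Mor X Y) (g : Mor Y X) : Prop :=
  cmp f g = idm X /\ cmp g f = idm Y.

Definition invertible (X Y : C) (f : Mor X Y) : Prop :=
  exists g : Mor Y X, is_inverse f g.

Definition is_core_inverse (X : C) (phi chi : Mor X X) : Prop :=
  [/\ star (cmp phi chi) = cmp phi chi,
      cmp phi (cmp chi chi) = chi &
      cmp chi (cmp phi phi) = phi].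

End Defs.

(* Main.v *)
Require Import Defs.
From HB Require Import structures.
From mathcomp Require Import all_boot all_order all_algebra.
Import GRing.Theory.
Local Open Scope ring_scope.

Module Aux.
Set Implicit Arguments. Unset Strict Implicit.

Section S.
Variable C : AddInvCat.
Local Notation "f ** g" := (cmp f g) (at level 40, left associativity).

Lemma cmp0l (A B D : C) (g : Mor B D) : (0 : Mor A B) ** g = 0.
Proof. apply: (@addrI _ ((0 : Mor A B) ** g)); by rewrite -cmpDl !addr0. Qed.
Lemma cmp0r (A B D : C) (f : Mor A B) : f ** (0 : Mor B D) = 0.
Proof. apply: (@addrI _ (f ** (0 : Mor B D))); by rewrite -cmpDr !addr0. Qed.
Lemma cmpNl (A B D : C) (f : Mor A B) (g : Mor B D) : (- f) ** g = - (f ** g).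
Proof. apply: (@addrI _ (f ** g)); by rewrite -cmpDl !subrr cmp0l. Qed.
Lemma cmpNr (A B D : C) (f : Mor A B) (g : Mor B D) : f ** (- g) = - (f ** g).
Proof. apply: (@addrI _ (f ** g)); by rewrite -cmpDr !subrr cmp0r. Qed.
Lemma cmpBl (A B D : C) (f f' : Mor A B) (g : Mor B D) : (f - f') ** g = f ** g - f' ** g.
Proof. by rewrite cmpDl cmpNl. Qed.
Lemma cmpBr (A B D : C) (f : Mor A B) (g g' : Mor B D) : f ** (g - g') = f ** g - f ** g'.
Proof. by rewrite cmpDr cmpNr. Qed.
Lemma star1 (A : C) : star (idm A) = idm A.
Proof.
have e := starM (idm A) (star (idm A)).
by rewrite cmp1l !starK cmp1l in e; rewrite -e.
Qed.
Lemma star0 (A B : C) : star (0 : Mor A B) = 0.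
Proof. apply: (@addrI _ (star (0 : Mor A B))); by rewrite -starD !addr0. Qed.
Lemma starN (A B : C) (f : Mor A B) : star (- f) = - star f.
Proof. apply: (@addrI _ (star f)); by rewrite -starD !subrr star0. Qed.
Lemma starB (A B : C) (f g : Mor A B) : star (f - g) = star f - star g.
Proof. by rewrite starD starN. Qed.
Lemma ctx (A B D Y : C) (f : Mor A B) (g : Mor B D) (h : Mor A D) :
  f ** g = h -> forall x : Mor Y A, x ** f ** g = x ** h.
Proof. by move=> e x; rewrite -cmpA e. Qed.
Lemma ctx3 (A B D E Y : C) (f : Mor A B) (g : Mor B D) (g2 : Mor D E) (h : Mor A E) :
  f ** g ** g2 = h -> forall x : Mor Y A, x ** f ** g ** g2 = x ** h.
Proof. by move=> e x; rewrite -e !cmpA. Qed.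
Lemma ctx4 (A B D E F Y : C) (f : Mor A B) (g : Mor B D) (g2 : Mor D E) (g3 : Mor E F) (h : Mor A F) :
  f ** g ** g2 ** g3 = h -> forall x : Mor Y A, x ** f ** g ** g2 ** g3 = x ** h.
Proof. by move=> e x; rewrite -e !cmpA. Qed.

Lemma ctx5 (A B D E F G Y : C) (f : Mor A B) (g : Mor B D) (g2 : Mor D E) (g3 : Mor E F) (g4 : Mor F G) (h : Mor A G) :
  f ** g ** g2 ** g3 ** g4 = h -> forall x : Mor Y A, x ** f ** g ** g2 ** g3 ** g4 = x ** h.
Proof. by move=> e x; rewrite -e !cmpA. Qed.

Ltac norm := rewrite ?cmpA ?cmp0l ?cmp0r ?cmp1l ?cmp1r.
Ltac use H := norm; repeat (first [rewrite H | rewrite (ctx H) | rewrite (ctx3 H) | rewrite (ctx4 H) | rewrite (ctx5 H)]; norm).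

Section K.
Variables (X K : C) (a : Mor X X) (k : Mor K X).
Hypothesis Hk : is_kernel a k.

Lemma ka : k ** a = 0. Proof. by case: Hk. Qed.
Lemma kfac (M : C) (al : Mor M X) : al ** a = 0 -> exists al', al' ** k = al.
Proof. by case: Hk => _ /(_ M al) H /H [x [e _]]; exists x. Qed.
Lemma kmono (M : C) (b c : Mor M K) : b ** k = c ** k -> b = c.
Proof.
case: Hk => _ /(_ M (b ** k)) H e.
have [x [_ u]] : exists! x, x ** k = b ** k by apply: H; rewrite -cmpA ka cmp0r.
by rewrite -(u b) // (u c).
Qed.

Section Core.
Variable chi : Mor X X.
Hypothesis Hc : is_core_inverse a chi.
Lemma c1 : star chi ** star a = a ** chi. Proof. by case: Hc => e _ _; rewrite -starM e. Qed.
Lemma c2 : a ** chi ** chi = chi. Proof. by case: Hc => _ e _; rewrite -cmpA e. Qed.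
Lemma c3 : chi ** a ** a = a. Proof. by case: Hc => _ _ e; rewrite -cmpA e. Qed.
Lemma aca : a ** chi ** a = a.
Proof. rewrite -{2}c3; use c2; by rewrite c3. Qed.
Lemma cac : chi ** a ** chi = chi.
Proof. rewrite -{2}c2; use c3; by rewrite c2. Qed.
Lemma kc : k ** chi = 0.
Proof. by rewrite -c2; use ka. Qed.
Lemma pw3 : pw a 3 = a ** a ** a. Proof. by rewrite /= cmp1r cmpA. Qed.
Lemma pw2 : pw a 2 = a ** a. Proof. by rewrite /= cmp1r. Qed.

Lemma fw : exists (L : C) (lam : Mor X L),
  [/\ is_cokernel a lam, invertible (k ** lam)
    & invertible (star a ** pw a 3 + star k ** k)].
Proof.
have c1 := c1; have c2 := c2; have c3 := c3; have aca := aca; have cac := cac; have kc := kc.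
have ka := ka.
have [g' eg] : exists g', g' ** k = idm X - a ** chi.
  by apply: kfac => //; rewrite cmpBl cmp1l aca subrr.
have [f' ef] : exists f', f' ** k = idm X - chi ** a.
  by apply: kfac => //; rewrite cmpBl cmp1l c3 subrr.
have kg : k ** g' = idm K.
  by apply: kmono; rewrite -cmpA eg cmpBr cmp1l cmp1r; use ka; rewrite subr0.
have kf : k ** f' = idm K.
  by apply: kmono; rewrite -cmpA ef cmpBr cmp1l cmp1r; use kc; rewrite subr0.
have af : a ** f' = 0.
  by apply: kmono; rewrite -cmpA ef cmpBr cmp1r; use aca; rewrite subrr ?cmp0l.
have fa : (idm X - chi ** a) ** a = 0 by rewrite cmpBl cmp1l c3 subrr.
have kf2 : k ** (idm X - chi ** a) = k by rewrite cmpBr cmp1r; use kc; rewrite subr0.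
exists K, ((idm X - chi ** a) ** g'); split.
- split; first by rewrite cmpA cmpBr cmp1r; use aca; rewrite subrr ?cmp0l.
  move=> M b ab; exists (k ** b); split.
    rewrite cmpA (ctx eg) cmpBr cmp1r (cmpA _ a) fa cmp0l subr0 cmpBl cmp1l -cmpA ab cmp0r subr0 //.
  by move=> y <-; rewrite !cmpA kf2 kg cmp1l.
- exists (idm K); split; first by rewrite cmp1r !cmpA kf2 kg.
  by rewrite cmp1l !cmpA kf2 kg.
have af0 : a ** (idm X - chi ** a) = 0 by rewrite cmpBr cmp1r; use aca; rewrite subrr.
have kcs : star chi ** star k = 0 by rewrite -starM kc star0.
have afs : star f' ** star a = 0 by rewrite -starM af star0.
have kfs : star f' ** star k = idm K by rewrite -starM kf star1.
have e1 : star a ** a ** chi ** star chi = star (chi ** a).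
  transitivity (star (chi ** a ** chi ** a)).
    rewrite !starM; norm; by rewrite -(cmpA (star a) a chi) -c1; norm.
  by rewrite cac.
set f := (idm X - chi ** a) in ef fa kf2 af0 *.
have fE : f = idm X - chi ** a by []. clearbody f.
exists (chi ** chi ** chi ** star chi + f ** g' ** star f'); split.
- rewrite pw3 !cmpDl !cmpDr; use c2; use kc; use af0; use kf2; use kg.
  by rewrite e1 addr0 add0r -starM ef fE starB star1 addrC subrK.
- rewrite pw3 !cmpDl !cmpDr; use c1; use aca; use c3; use kcs; use afs; use kfs; use eg.
  rewrite addr0 add0r cmpBr cmp1r (cmpA _ a) fa cmp0l subr0.
  by rewrite fE addrC subrK.
Qed.
End Core.

Lemma bw (gam : Mor X K) (v : Mor X X) : k ** gam = idm K -> a ** gam = 0 ->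
  is_inverse (star a ** pw a 3 + star k ** k) v ->
  is_core_inverse a (a ** a ** v ** star a).
Proof.
move=> kg ag [Hv1 Hv2]; rewrite pw3 in Hv1 Hv2.
have ka := ka.
have s1 : v ** star k = gam.
  have := congr1 (fun x => x ** gam) Hv2; rewrite /= cmpDr !cmpDl cmp1l.
  by use ag; use kg; rewrite add0r.
have s2 : v ** star a ** a ** a ** a = idm X - gam ** k.
  by rewrite -Hv2 cmpDr; use s1; rewrite addrK.
set h := idm X - gam ** k in s2.
have hE : h = idm X - gam ** k by []. clearbody h.
have ah : a ** h = a by rewrite hE cmpBr cmp1r; use ag; rewrite subr0.
have kh : k ** h = 0 by rewrite hE cmpBr cmp1r; use kg; rewrite subrr.
have hs : star h ** star k = 0 by rewrite -starM kh star0.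
have hsa : star h ** star a = star a by rewrite -starM ah.
have s3 : star a ** a ** a ** a ** v = star h.
  have := congr1 (fun x => star h ** x) Hv1; rewrite /= cmpDl !cmpDr cmp1r.
  by use hs; use hsa; rewrite addr0.
set s := a ** a ** v ** star a.
have sE : s = a ** a ** v ** star a by []. clearbody s.
have aps : star a ** (a ** s) = star a by rewrite sE; use s3; use hsa.
have e : star (a ** s) ** (a ** s) = star (a ** s).
  by rewrite {1}starM -cmpA aps -starM.
have pherm : star (a ** s) = a ** s.
  by symmetry; rewrite -{1}(starK (a ** s)) -{1}e starM starK e.
have pa : a ** s ** a = a.
  by have := congr1 star aps; rewrite starM starK pherm.
split => //.
- by rewrite cmpA {2}sE; use pa; rewrite -sE.
- set t := a ** v ** star a ** a ** a.
  have tE : t = a ** v ** star a ** a ** a by []. clearbody t.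
  have ta : t ** a = a.
    by rewrite tE; use s2; rewrite ah.
  have [z ez] : exists z, z ** k = t - idm X.
    by apply: kfac; rewrite cmpBl ta cmp1l subrr.
  have az : a ** z = 0.
    by rewrite -[z]cmp1r -kg (cmpA z) ez cmpBl cmp1l cmpBr ag subr0 tE; use ag.
  have aT : a ** t = a.
    by rewrite -[t](subrK (idm X)) -ez cmpDr cmpA az cmp0l add0r cmp1r.
  by rewrite -[RHS]aT sE tE; norm.
Qed.
End K.

Lemma core_uniq (X : C) (a x1 x2 : Mor X X) :
  is_core_inverse a x1 -> is_core_inverse a x2 -> x1 = x2.
Proof.
move=> H1 H2.
have p21 : a ** x2 ** (a ** x1) = a ** x1 by rewrite cmpA (aca H2).
have p12 : a ** x1 ** (a ** x2) = a ** x2 by rewrite cmpA (aca H1).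
have pe : a ** x1 = a ** x2.
  case: H1 => e1 _ _; case: H2 => e2 _ _.
  transitivity (star (a ** x1)); first by rewrite e1.
  by rewrite -{1}p21 starM e1 e2 p12.
transitivity (x1 ** (a ** x2)); first by rewrite -pe cmpA (cac H1).
by rewrite -{1}(c2 H2) !cmpA (c3 H1) (c2 H2).
Qed.
End S.
End Aux.
Import Aux.

Theorem theorem2p3 (C : AddInvCat) (X K : C) (phi : Mor X X) (kappa : Mor K X) :
  is_kernel phi kappa ->
  ((exists chi : Mor X X, is_core_inverse phi chi) <->
   (exists (L : C) (lam : Mor X L),
       [/\ is_cokernel phi lam, invertible (cmp kappa lam)
         & invertible (cmp (star phi) (pw phi 3) + cmp (star kappa) kappa)]))
  /\
  (forall chi : Mor X X, is_core_inverse phi chi ->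
   forall (L : C) (lam : Mor X L), is_cokernel phi lam ->
   forall u : Mor L K, is_inverse (cmp kappa lam) u ->
   forall v : Mor X X,
     is_inverse (cmp (star phi) (pw phi 3) + cmp (star kappa) kappa) v ->
     [/\ is_cokernel phi (cmp lam u),
         cmp chi phi + cmp (cmp lam u) kappa = idm X
       & chi = cmp (pw phi 2) (cmp v (star phi))]).
Proof.
move=> Hk; split.
  split. case=> chi Hc. exact (fw Hk Hc).
  case=> L [lam [[al _] [u [u1 u2]] [v Hv]]].
  exists (cmp (pw phi 2) (cmp v (star phi))); rewrite pw2 cmpA.
  have kg : cmp kappa (cmp lam u) = idm K by rewrite cmpA u1.
  have ag : cmp phi (cmp lam u) = 0 by rewrite cmpA al cmp0l.
  exact (bw Hk kg ag Hv).
move=> chi Hc L lam [al Hl] u [u1 u2] v Hv.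
have kg : cmp kappa (cmp lam u) = idm K by rewrite cmpA u1.
have ag : cmp phi (cmp lam u) = 0 by rewrite cmpA al cmp0l.
have u2' : cmp (cmp u kappa) lam = idm L by rewrite -cmpA u2.
have gfac : forall M (b : Mor X M), cmp phi b = 0 ->
    cmp (cmp (cmp lam u) kappa) b = b.
  move=> M b /Hl [b' [<- _]].
  by rewrite !cmpA (ctx3 u2') cmp1r.
split.
- split => // M b ab; exists (cmp kappa b); split; first by rewrite cmpA; exact: gfac.
  by move=> y <-; rewrite !cmpA -(cmpA kappa lam u) kg cmp1l.
- have af0 : cmp phi (idm X - cmp chi phi) = 0.
    by rewrite cmpBr cmp1r cmpA (aca Hc) subrr.
  have := gfac _ _ af0; rewrite cmpBr cmp1r => e.
  have z : cmp (cmp (cmp lam u) kappa) (cmp chi phi) = 0.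
    by rewrite cmpA -(cmpA _ kappa chi) (kc Hk Hc) cmp0r cmp0l.
  by rewrite z subr0 in e; rewrite e addrC subrK.
- apply: core_uniq Hc _; rewrite pw2 cmpA.
  exact (bw Hk kg ag Hv).
Qed.
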